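(* Consider the following slotted system. There are $N\ge2$ users and slots $t=1,\dots,T$. In each slot the BS schedules one user by a deterministic algorithm, whose choice in slot $t$ may depend on the adversary's actions before slot $t$. An adversary uses a blocking matrix $\sigma\in\{0,1\}^{N\times T}$, where $\sigma_i(t)=0$ means user $i$ is blocked in slot $t$. Feasibility means $\sum_{i,t}(1-\sigma_i(t))\le\alpha T$ and at most one user is blocked per slot, where $0<\alpha<1$ and $\alpha T\in\mathbb Z$. Ages satisfy $a_i(1)=1$, $a_i(t+1)=1$ if user $i$ is scheduled and not blocked in slot $t$, and $a_i(t+1)=a_i(t)+1$ otherwise. The average age is $\Delta=\frac1T\sum_{t=1}^T\frac1N\sum_i a_i(t)$. Then for every deterministic scheduling algorithm there exists a feasible blocking matrix under which $\Delta\ge\frac{T\alpha^2}{2}$. *)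

(* Defs.v *)
From mathcomp Require Import all_boot all_order all_algebra.
Set Implicit Arguments. Unset Strict Implicit. Unset Printing Implicit Defensive.
Import Order.TTheory GRing.Theory Num.Theory.

(* A blocking matrix: [sigma t i = false] iff user i is blocked in slot t
   (i.e. sigma_i(t) = 0).  Slots are t = 1..T; values outside are irrelevant. *)
Definition blocking (N : nat) := nat -> 'I_N -> bool.

(* A deterministic scheduling algorithm: in slot t it picks a user as a
   function of the (whole) blocking matrix, subject to causality below. *)
Definition scheduler (N : nat) := nat -> blocking N -> 'I_N.

Definition causal (N : nat) (A : scheduler N) : Prop :=
  forall (t : nat) (s1 s2 : blocking N),
    (forall s i, 1 <= s < t -> s1 s i = s2 s i) -> A t s1 = A t s2.

(* Feasibility: total number of blocked (user,slot) pairs over slots 1..T is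
   at most alpha*T = k, and at most one user is blocked per slot. *)
Definition feasible (N T k : nat) (sigma : blocking N) : Prop :=
  (\sum_(1 <= t < T.+1) \sum_(i < N) (~~ sigma t i : nat) <= k)%N /\
  (forall t, 1 <= t <= T -> \sum_(i < N) (~~ sigma t i : nat) <= 1)%N.

Fixpoint age (N : nat) (A : scheduler N) (sigma : blocking N) (i : 'I_N)
    (t : nat) : nat :=
  match t with
  | 0 => 1
  | t'.+1 =>
      if t' == 0 then 1
      else if (A t' sigma == i) && sigma t' i then 1
      else (age A sigma i t').+1
  end.

Local Open Scope ring_scope.

Definition avg_age (R : realFieldType) (N T : nat) (A : scheduler N)
    (sigma : blocking N) : R :=
  (T%:R)^-1 * \sum_(1 <= t < T.+1) ((N%:R)^-1 * \sum_(i < N) (age A sigma i t)%:R).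

(* Main.v *)
Require Import Defs.
From mathcomp Require Import all_boot all_order all_algebra.
From mathcomp Require Import ring lra zify.
Import Order.TTheory GRing.Theory Num.Theory.

Section Adv.
Variables (N : nat) (A : scheduler N).

Fixpoint advsig (n : nat) : blocking N :=
  match n with
  | 0 => fun _ _ => true
  | n'.+1 => fun s i => if s == n'.+1 then A n'.+1 (advsig n') != i else advsig n' s i
  end.

Lemma sig_out n s i : (n < s)%N || (s == 0)%N -> advsig n s i = true.
Proof.
elim: n => [//|n IH] /= H.
case: eqP => [E|_]; first by move: H; rewrite E ltnn.
by apply: IH; case/orP: H => [H|->]; rewrite ?orbT // (ltn_trans _ H).
Qed.

Lemma sig_stable n m s i : (s <= n)%N -> (n <= m)%N -> advsig m s i = advsig n s i.
Proof.
move=> hs; elim: m => [|m IH] hm.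
  by move: hm; rewrite leqn0 => /eqP ->.
move: hm; rewrite leq_eqVlt => /orP [/eqP <-//|hm].
rewrite /= IH //; case: eqP => // E.
by move: hm; rewrite -E ltnNge hs.
Qed.

Lemma sig_slot k t i : causal A -> (1 <= t <= k)%N ->
  advsig k t i = (A t (advsig k) != i).
Proof.
move=> hA /andP [h1 h2].
have -> : A t (advsig k) = A t (advsig t.-1).
  apply: hA => s j /andP [_ hs]; apply: sig_stable.
    by rewrite -ltnS prednK.
  by rewrite (leq_trans (leq_pred t)).
rewrite (sig_stable t k t i (leqnn t) h2).
by case: t h1 {h2} => //= t _; rewrite eqxx.
Qed.

End Adv.

Local Open Scope ring_scope.

Theorem lemma1 (R : realFieldType) (N T : nat) (alpha : R)
  (hN : (2 <= N)%N) (hT : (1 <= T)%N)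
  (ha0 : 0 < alpha) (ha1 : alpha < 1)
  (k : nat) (hk : alpha * T%:R = k%:R)
  (A : scheduler N) (hA : causal A) :
  exists sigma : blocking N,
    feasible T k sigma /\
    T%:R * alpha ^+ 2 / 2%:R <= avg_age R T A sigma.
Proof.
have hkT : (k <= T)%N.
  rewrite -(ler_nat R) -hk; rewrite -[X in _ <= X]mul1r ler_wpM2r //; lra.
exists (advsig N A k).
have slot t : (1 <= t <= k)%N -> forall i, advsig N A k t i = (A t (advsig N A k) != i).
  by move=> ht i; apply: sig_slot.
have per t : (\sum_(i < N) (~~ advsig N A k t i : nat) <= ((1 <= t)%N && (t <= k)%N))%N.
  case: (boolP ((1 <= t)%N && (t <= k)%N)) => ht.
    rewrite (bigD1 (A t (advsig N A k))) //= slot // eqxx /= big1 // => i hi.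
    by rewrite slot // eq_sym (negPf hi).
  rewrite big1 // => i _; rewrite sig_out //.
  by move: ht; case/nandP => H; apply/orP; [right; move: H; rewrite lt0n negbK | left; rewrite ltnNge].
split; first split.
- apply: (@leq_trans (\sum_(1 <= t < T.+1) ((1 <= t)%N && (t <= k)%N) : nat)).
    by apply: leq_sum => t _; apply: per.
  rewrite (@big_cat_nat _ _ _ k.+1) //= ?ltnS //.
  rewrite (eq_big_nat _ _ (F2 := fun _ => 1%N)); last first.
    by move=> t /andP [-> ]; rewrite ltnS => ->.
  rewrite sum_nat_const_nat muln1 subn1 /= big_nat_cond big1 ?addn0 //.
  by move=> t /andP [/andP [h1 _] _]; move: h1; rewrite ltnNge => /negPf ->; rewrite andbF.
- by move=> t ht; apply: (leq_trans (per t)); case: (_ && _).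
have age_eq i t : (t <= k)%N -> age A (advsig N A k) i t.+1 = t.+1.
  elim: t => [//|t IH] ht.
  have -> : age A (advsig N A k) i t.+2 = if (A t.+1 (advsig N A k) == i) && advsig N A k t.+1 i then 1%N else (age A (advsig N A k) i t.+1).+1 by [].
  rewrite slot ?ht // andbN IH //; exact: ltnW.
rewrite /avg_age.
have N0 : (N%:R : R) != 0 by rewrite pnatr_eq0 -lt0n (leq_trans _ hN).
have T0 : (T%:R : R) > 0 by rewrite ltr0n.
set S := \sum_(1 <= t < T.+1) _.
have S1 : (\sum_(1 <= t < k.+1) (t%:R : R)) <= S.
  rewrite /S [X in _ <= X](@big_cat_nat _ _ _ k.+1) //= ?ltnS //.
  rewrite -[X in X <= _]addr0; apply: lerD; last first.
    apply: sumr_ge0 => t _; apply: mulr_ge0; rewrite ?invr_ge0 ?ler0n //.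
    by apply: sumr_ge0 => i _; rewrite ler0n.
  rewrite le_eqVlt; apply/orP; left; apply/eqP.
  apply: eq_big_nat => t /andP [h1 h2].
  rewrite (eq_bigr (fun _ => t%:R)); last first.
    by move=> i _; case: t h1 h2 => // t _ h2; rewrite age_eq //; rewrite ltnS in h2; exact: ltnW.
  by rewrite sumr_const card_ord -[_ *+ N]mulr_natr; field.
have S2 n : 2%:R * (\sum_(1 <= t < n.+1) (t%:R : R)) = n%:R * n.+1%:R.
  elim: n => [|n IH]; first by rewrite big_geq // mulr0 mul0r.
  rewrite big_nat_recr //= mulrDr IH -!natrM -natrD; apply/eqP; rewrite eqr_nat; apply/eqP; lia.
have Sge : (k%:R * k%:R : R) / 2%:R <= S.
  apply: le_trans S1; rewrite ler_pdivrMr ?ltr0n // [X in _ <= X]mulrC S2.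
  by rewrite -!natrM ler_nat leq_mul2l leqnSn orbT.
rewrite -hk in Sge.
have -> : T%:R * alpha ^+ 2 / 2%:R = T%:R^-1 * (alpha * T%:R * (alpha * T%:R) / 2%:R).
  by field; rewrite lt0r_neq0.
by rewrite ler_wpM2l // invr_ge0 ltW.
Qed.
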